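(* Let $V$ be a finite set with weights $\pi:V\to\mathbb{R}_+$, $\pi(V)=1$, and let $v_i\in\mathbb{R}^n$, $i\in V$, satisfy $\sum_{i<j}\pi(i)\pi(j)\|v_i-v_j\|^2=1$. Then one of the following holds: (i) (large core) there is a vector $v$ with $\pi\big(\{i:\|v_i-v\|\le\frac{1}{2\sqrt{10}}\}\big)\ge 1/4$; (ii) (well spread) there is a vector $w$ and a constant $c>0$ such that, setting $u_i=c(v_i-w)$, there is a subset $U\subseteq V$ with $\pi(U)\gtrsim1$, $\|u_i\|\le1$ for all $i\in U$, and $\sum_{i,j\in U}\pi(i)\pi(j)\|u_i-u_j\|^2\gtrsim1$.
   Context: $\pi(A)=\sum_{i\in A}\pi(i)$; $\gtrsim$ hides absolute positive constants. *)

(* Defs.v *)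
From mathcomp Require Import all_boot all_order all_algebra.
Set Implicit Arguments. Unset Strict Implicit. Unset Printing Implicit Defensive.
Import Order.TTheory GRing.Theory Num.Theory.
Local Open Scope ring_scope.

Definition sqnorm (R : rcfType) (n : nat) (x : 'rV[R]_n) : R :=
  \sum_(k < n) (x 0 k) ^+ 2.

Definition enorm (R : rcfType) (n : nat) (x : 'rV[R]_n) : R :=
  Num.sqrt (sqnorm x).

(* Main.v *)
Require Import Defs.
From mathcomp Require Import all_boot all_order all_algebra.
From mathcomp Require Import ring lra.
From Stdlib Require Import Classical.
Import Order.TTheory GRing.Theory Num.Theory.
Local Open Scope ring_scope.

Lemma sqnorm_ge0 {R : rcfType} {n : nat} (x : 'rV[R]_n) : 0 <= sqnorm x.
Proof. by apply: sumr_ge0 => k _; rewrite sqr_ge0. Qed.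

Lemma sqnormZ {R : rcfType} {n : nat} (a : R) (x : 'rV[R]_n) :
  sqnorm (a *: x) = a ^+ 2 * sqnorm x.
Proof. rewrite /sqnorm mulr_sumr; apply: eq_bigr => k _; by rewrite mxE exprMn. Qed.

Lemma sqnormN {R : rcfType} {n : nat} (x : 'rV[R]_n) : sqnorm (- x) = sqnorm x.
Proof. rewrite /sqnorm; apply: eq_bigr => k _; by rewrite mxE sqrrN. Qed.

Lemma sqnormC {R : rcfType} {n : nat} (x y : 'rV[R]_n) : sqnorm (x - y) = sqnorm (y - x).
Proof. by rewrite -sqnormN opprB. Qed.

Lemma enorm_gt {R : rcfType} {n : nat} (y : 'rV[R]_n) :
  ~~ (enorm y <= 1 / (2 * Num.sqrt 10)) -> 1 / 40 < sqnorm y.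
Proof.
rewrite -ltNge /enorm => h.
have s0 := sqnorm_ge0 y.
have e0 : 0 <= Num.sqrt (sqnorm y) := sqrtr_ge0 _.
have e2 : Num.sqrt (sqnorm y) ^+ 2 = sqnorm y := sqr_sqrtr s0.
have t0 : 0 <= Num.sqrt (10:R) := sqrtr_ge0 _.
have t2 : Num.sqrt (10:R) ^+ 2 = 10 by rewrite sqr_sqrtr // ler0n.
have tp : 0 < Num.sqrt (10:R) by rewrite sqrtr_gt0 ltr0n.
move: h; rewrite ltr_pdivrMr; last by rewrite mulr_gt0.
move: e0 e2 t0 t2 tp; set e := Num.sqrt _; set t := Num.sqrt _ => e0 e2 t0 t2 tp h.
rewrite -e2. nra.
Qed.

Lemma sum_sub_le {R : rcfType} {m : nat} (U : {set 'I_m}) (F : 'I_m -> R) :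
  (forall i, 0 <= F i) -> \sum_(i in U) F i <= \sum_i F i.
Proof.
move=> F0; rewrite [X in _ <= X](bigID (mem U)) /= lerDl.
by apply: sumr_ge0 => i _.
Qed.

Lemma sqnorm0 {R : rcfType} {n : nat} (x : 'rV[R]_n) : sqnorm (x - x) = 0.
Proof. rewrite subrr /sqnorm big1 // => k _; by rewrite mxE expr2 mulr0. Qed.

Theorem mainTheorem11 (R : rcfType) :
  exists c1 c2 : R, 0 < c1 /\ 0 < c2 /\
  forall (m n : nat) (pi : 'I_m -> R) (v : 'I_m -> 'rV[R]_n),
    (forall i, 0 <= pi i) ->
    \sum_(i < m) pi i = 1 ->
    \sum_(i < m) \sum_(j < m | (i < j)%N) pi i * pi j * sqnorm (v i - v j) = 1 ->
    (exists x : 'rV[R]_n,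
        \sum_(i < m | enorm (v i - x) <= 1 / (2 * Num.sqrt 10)) pi i >= 1 / 4)
    \/
    (exists (w : 'rV[R]_n) (c : R), 0 < c /\
       exists U : {set 'I_m},
         \sum_(i in U) pi i >= c1 /\
         (forall i, i \in U -> enorm (c *: (v i - w)) <= 1) /\
         \sum_(i in U) \sum_(j in U)
            pi i * pi j * sqnorm (c *: (v i - w) - c *: (v j - w)) >= c2).
Proof.
exists (3/4), (1/1000); split; first lra; split; first lra.
move=> m n pi v pi0 pi1 H1.
case: (classic (exists x : 'rV[R]_n,
        \sum_(i < m | enorm (v i - x) <= 1 / (2 * Num.sqrt 10)) pi i >= 1 / 4)) => [h|h].
  by left.
right.
have hx : forall x, \sum_(i < m | enorm (v i - x) <= 1 / (2 * Num.sqrt 10)) pi i < 1 / 4.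
  move=> x; rewrite ltNge; apply/negP => hh; apply: h; by exists x.
pose G i j := pi i * pi j * sqnorm (v i - v j).
have GS : forall i j, G i j = G j i.
  by move=> i j; rewrite /G sqnormC [pi i * _]mulrC.
have G0 : forall i j, 0 <= G i j.
  by move=> i j; rewrite /G !mulr_ge0 // sqnorm_ge0.
have H2 : \sum_(i < m) \sum_(j < m) G i j = 2.
  have -> : \sum_(i < m) \sum_(j < m) G i j = \sum_(i < m) \sum_(j < m) (if (i < j)%N then G i j else 0)
       + \sum_(i < m) \sum_(j < m) (if (j < i)%N then G i j else 0).
    rewrite -big_split /=; apply: eq_bigr => i _; rewrite -big_split /=.
    apply: eq_bigr => j _; case: ltngtP => hij; rewrite ?addr0 ?add0r //.
    have -> : i = j by apply: val_inj.
    by rewrite /G sqnorm0 mulr0.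
  rewrite [X in _ + X]exchange_big /=.
  under [X in _ + X]eq_bigr => j _ do under eq_bigr => i _ do rewrite GS.
  have -> : \sum_(i < m) \sum_(j < m) (if (i < j)%N then G i j else 0) = 1.
    by rewrite -H1; apply: eq_bigr => i _; rewrite -big_mkcond.
  lra.
pose f i := \sum_j pi j * sqnorm (v i - v j).
have Hf : \sum_(i < m) pi i * f i = 2.
  rewrite -H2; apply: eq_bigr => i _; rewrite /f mulr_sumr; apply: eq_bigr => j _.
  by rewrite /G mulrA.
have [i0 hi0] : exists i0, f i0 <= 2.
  case: (classic (exists i0, f i0 <= 2)) => // hn; exfalso.
  have hlt : forall i, 2 < f i by move=> i; rewrite ltNge; apply/negP => hh; apply: hn; exists i.
  have hsub : forall i, 0 < f i - 2 by move=> i; rewrite subr_gt0.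
  have hs : \sum_(i < m) pi i * (f i - 2) = 0.
    under eq_bigr => i _ do rewrite mulrBr.
    by rewrite sumrB Hf -mulr_suml pi1 mul1r subrr.
  have hz := psumr_eq0P (P := xpredT) (fun i _ => mulr_ge0 (pi0 i) (ltW (hsub i))) hs.
  have : \sum_(i < m) pi i = 0.
    apply: big1 => i _; have := hz i isT; move/eqP; rewrite mulf_eq0 => /orP [/eqP //|].
    by rewrite subr_eq0 => /eqP e; move: (hlt i); rewrite e ltxx.
  by rewrite pi1 => /eqP; rewrite oner_eq0.
pose w := v i0.
pose U := [set j : 'I_m | sqnorm (v j - w) <= 9].
have hUc : \sum_(j < m | j \notin U) pi j <= 2 / 9.
  apply: (@le_trans _ _ (\sum_(j < m | j \notin U) pi j * sqnorm (v i0 - v j) / 9)).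
    apply: ler_sum => j; rewrite inE -ltNge sqnormC => hj.
    rewrite -mulrA ler_peMr // ler_pdivlMr //; lra.
  rewrite -mulr_suml; apply: ler_wpM2r; first by rewrite invr_ge0 ler0n.
  apply: (@le_trans _ _ (f i0)) => //; rewrite /f [X in _ <= X](bigID (mem U)) /=.
  rewrite lerDr; by apply: sumr_ge0 => j _; rewrite mulr_ge0 // sqnorm_ge0.
have hU : 7 / 9 <= \sum_(j in U) pi j.
  move: pi1; rewrite (bigID (mem U)) /=; lra.
exists w, (1/3); split; first lra.
exists U; split; first lra.
split.
  move=> i; rewrite inE => hi; rewrite /enorm sqnormZ -[X in _ <= X]sqrtr1.
  apply: ler_wsqrtr; rewrite expr2; lra.
have hS : forall i, \sum_(j in U) pi j * sqnorm (v i - v j) >= 19 / 1440.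
  move=> i.
  pose nr j := enorm (v j - v i) <= 1 / (2 * Num.sqrt 10).
  apply: (@le_trans _ _ (\sum_(j in U) (pi j / 40 - (if nr j then pi j / 40 else 0)))); last first.
    apply: ler_sum => j _; case hn: (nr j).
      by rewrite subrr mulr_ge0 // sqnorm_ge0.
    rewrite subr0; apply: ler_wpM2l => //.
    have := enorm_gt (v j - v i); rewrite /nr in hn; rewrite hn sqnormC => hh.
    by apply: ltW; rewrite mul1r in hh; apply: hh.
  rewrite sumrB -mulr_suml.
  have : \sum_(j in U) (if nr j then pi j / 40 else 0) <= (1/4) / 40.
    have g0 : forall j, 0 <= (if nr j then pi j / 40 else 0).
      by move=> j; case: (nr j) => //; rewrite mulr_ge0 // invr_ge0 ler0n.
    apply: (@le_trans _ _ _ _ _ (sum_sub_le U _ g0)).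
    rewrite -big_mkcond /= -mulr_suml; apply: ler_wpM2r; first by rewrite invr_ge0 ler0n. 
    exact: ltW (hx (v i)).
  lra.
have eqs : forall i j, pi i * pi j * sqnorm ((1/3) *: (v i - w) - (1/3) *: (v j - w))
   = (1/9) * pi i * (pi j * sqnorm (v i - v j)).
  move=> i j; rewrite -scalerBr opprB addrA subrK sqnormZ.
  have -> : ((1:R)/3) ^+ 2 = 1/9 by rewrite expr2; field.
  ring.
under eq_bigr => i _ do under eq_bigr => j _ do rewrite eqs.
under eq_bigr => i _ do rewrite -mulr_sumr.
apply: (@le_trans _ _ (\sum_(i in U) (1/9) * pi i * (19/1440))); last first.
  apply: ler_sum => i _; apply: ler_wpM2l; last exact: hS.
  by have := pi0 i; lra.
rewrite -mulr_suml -mulr_sumr.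
lra.
Qed.
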